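(* Let $G$ be an undirected, weighted, connected graph on vertices $1,\dots,n$, and let $H$ be either its adjacency matrix or its Laplacian matrix. Write $H=Q^T\Lambda Q$ with $Q$ a real orthogonal matrix and $\Lambda=\mathrm{diag}(\lambda_1,\dots,\lambda_n)$, $\lambda_1\le\cdots\le\lambda_n$. For real $t$ let $p(t)=|\langle s|e^{itH}|r\rangle|^2$ be the fidelity of state transfer from a sender vertex $s$ to a receiver vertex $r$, and suppose there is perfect state transfer at time $t_0$, i.e. $p(t_0)=1$. For $j=1,\dots,n$ let $q_{j}$ denote the $(j,s)$ entry of $Q$ (the $s$-th entry of the $j$-th orthonormal eigenvector of $H$). Let $h\in\mathbb{R}$ satisfy $|h|<\frac{\pi}{\lambda_n-\lambda_1}$. Then for every $\sigma\in\mathbb{R}$, \[ p(t_0+h)\ \ge\ 1-h^2\sum_{j=1}^n q_{j}^2(\lambda_j-\sigma)^2 . \]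
   Context: For a weighted graph with edge weights $w(j,k)$, the adjacency matrix $A=[a_{jk}]$ has $a_{jk}=w(j,k)$ if $j,k$ are adjacent and $a_{jk}=0$ otherwise; the Laplacian is $L=R-A$ where $R$ is the diagonal matrix of row sums of $A$. $\{|1\rangle,\dots,|n\rangle\}$ is the standard basis of $\mathbb{C}^n$, so $\langle s|e^{itH}|r\rangle$ is the $(s,r)$ entry of $e^{itH}$. *)

(* Defs.v *)
From HB Require Import structures.
From mathcomp Require Import all_boot all_order all_algebra.
From mathcomp Require Import all_classical all_reals all_analysis.
Set Implicit Arguments. Unset Strict Implicit. Unset Printing Implicit Defensive.
Import Order.TTheory GRing.Theory Num.Theory.
Local Open Scope ring_scope.

Section Defs.
Variable R : realType.
Variable n : nat.
(* vertices are 'I_n.+1 (a graph with n.+1 >= 1 vertices) *)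

Definition weighted_graph (e : rel 'I_n.+1) (w : 'I_n.+1 -> 'I_n.+1 -> R) : Prop :=
  (forall j k, e j k = e k j) /\ (forall j, ~~ e j j) /\
  (forall j k, w j k = w k j) /\ (forall j k, e j k -> 0 < w j k).

Definition connected_graph (e : rel 'I_n.+1) : Prop :=
  forall j k, connect e j k.

Definition adjacency_mx (e : rel 'I_n.+1) (w : 'I_n.+1 -> 'I_n.+1 -> R) : 'M[R]_n.+1 :=
  \matrix_(j, k) (if e j k then w j k else 0).

Definition laplacian_mx (e : rel 'I_n.+1) (w : 'I_n.+1 -> 'I_n.+1 -> R) : 'M[R]_n.+1 :=
  diag_mx (\row_j (\sum_k adjacency_mx e w j k)) - adjacency_mx e w.

(* For a real matrix H, e^{itH} = sum_k (itH)^k / k!.  Its (s,r) entry has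
   real part  sum_k (-1)^k t^(2k) (H^(2k))_{sr} / (2k)!
   and imaginary part sum_k (-1)^k t^(2k+1) (H^(2k+1))_{sr} / (2k+1)!. *)
Definition expitH_re (H : 'M[R]_n.+1) (t : R) (s r : 'I_n.+1) : R :=
  \big[+%R/0%R]_(0 <= k <oo) ((-1) ^+ k * t ^+ (2 * k) / ((2 * k)`!)%:R * (H ^+ (2 * k)) s r).

Definition expitH_im (H : 'M[R]_n.+1) (t : R) (s r : 'I_n.+1) : R :=
  \big[+%R/0%R]_(0 <= k <oo) ((-1) ^+ k * t ^+ (2 * k).+1 / ((2 * k).+1`!)%:R
                      * (H ^+ (2 * k).+1) s r).

Definition fidelity (H : 'M[R]_n.+1) (s r : 'I_n.+1) (t : R) : R :=
  expitH_re H t s r ^+ 2 + expitH_im H t s r ^+ 2.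

End Defs.

(* Main.v *)
Require Import Defs.
From HB Require Import structures.
From mathcomp Require Import all_boot all_order all_algebra.
From mathcomp Require Import all_classical all_reals all_analysis.
From mathcomp Require Import ring lra.
Import Order.TTheory GRing.Theory Num.Theory.
Import numFieldNormedType.Exports.
Local Open Scope ring_scope.

Section Aux.
Local Open Scope classical_set_scope.
Local Open Scope ring_scope.
Variable R : realType.

Lemma sin_le_id (x : R) : 0 <= x -> sin x <= x.
Proof.
move=> x0.
have D y : is_derive y (1:R) (id - sin : R -> R) (1 - cos y).
  exact: is_deriveB.
have dv y : derivable (id - sin : R -> R) y 1 by apply: ex_derive; exact: D.
have h1 : forall y, y \in `]0, x[ -> 0 <= derive1 (id - sin : R -> R) y.
  move=> y _; rewrite derive1E derive_val subr_ge0; exact: cos_le1.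
have h2 : {within `[0, x], continuous (id - sin : R -> R)}.
  apply: continuous_subspaceT => y; apply: differentiable_continuous.
  exact/derivable1_diffP.
have := @ger0_derive1_ndecr R (id - sin) 0 x (fun y _ => dv y) h1 h2 0 x (le_refl _) x0 (le_refl _).
rewrite !fctE /= sin0 subr0 subr_ge0 //.
Qed.

Lemma sin_ge_Nid (x : R) : 0 <= x -> - x <= sin x.
Proof.
move=> x0.
have D y : is_derive y (1:R) (id + sin : R -> R) (1 + cos y).
  exact: is_deriveD.
have dv y : derivable (id + sin : R -> R) y 1 by apply: ex_derive; exact: D.
have h1 : forall y, y \in `]0, x[ -> 0 <= derive1 (id + sin : R -> R) y.
  move=> y _; rewrite derive1E derive_val -lerBlDl sub0r; exact: cos_geN1.
have h2 : {within `[0, x], continuous (id + sin : R -> R)}.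
  apply: continuous_subspaceT => y; apply: differentiable_continuous.
  exact/derivable1_diffP.
have := @ger0_derive1_ndecr R (id + sin) 0 x (fun y _ => dv y) h1 h2 0 x (le_refl _) x0 (le_refl _).
rewrite !fctE /= sin0 addr0 -lerBlDl sub0r //.
Qed.

Lemma sin_sqr_le (x : R) : sin x ^+ 2 <= x ^+ 2.
Proof.
have [x0|x0] := leP 0 x.
  have := sin_le_id _ x0; have := sin_ge_Nid _ x0; nra.
have x0' : 0 <= - x by lra.
have := sin_le_id _ x0'; have := sin_ge_Nid _ x0'; rewrite sinN; nra.
Qed.

Lemma cos_ge (x : R) : 1 - x ^+ 2 / 2 <= cos x.
Proof.
have h := sin_sqr_le (x / 2).
have e : cos x = 1 - 2 * sin (x / 2) ^+ 2.
  rewrite {1}(_ : x = (x/2) *+ 2); last by rewrite -mulr_natr mulfVK.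
  rewrite cos_mulr2n cos2sin2 -mulr_natr.
  ring.
have e2 : x ^+ 2 / 2 = 2 * (x / 2) ^+ 2.
  by field.
by rewrite e e2 lerD2l lerN2 ler_pM2l.
Qed.

Lemma cvg_bigsum (J : Type) (r : seq J) (u : J -> nat -> R) (l : J -> R) :
  (forall j, u j @ \oo --> l j) ->
  (fun N => \sum_(j <- r) u j N) @ \oo --> \sum_(j <- r) l j.
Proof.
move=> hu; elim: r => [|a r IH].
  rewrite big_nil; under eq_fun do rewrite big_nil; exact: cvg_cst.
rewrite big_cons; under eq_fun do rewrite big_cons.
exact: cvgD.
Qed.

Variable n : nat.

Lemma expre (H : 'M[R]_n.+1) (c lam : 'I_n.+1 -> R) s r t :
  (forall k, (H ^+ k) s r = \sum_j c j * lam j ^+ k) ->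
  expitH_re H t s r = \sum_j c j * cos (t * lam j).
Proof.
move=> Hk; rewrite /expitH_re; apply: cvg_lim => //.
have -> : (fun N => \big[+%R/0]_(0 <= k < N) ((-1) ^+ k * t ^+ (2 * k) / ((2 * k)`!)%:R * (H ^+ (2 * k)) s r))
  = (fun N => \sum_j c j * series (cos_coeff' (t * lam j)) N).
  apply/funext => N; rewrite /series /=.
  under eq_bigr do rewrite Hk mulr_sumr.
  rewrite exchange_big /=; apply: eq_bigr => j _; rewrite mulr_sumr.
  apply: eq_bigr => k _; rewrite /cos_coeff' -exprnP mul2n exprMn; ring.
apply: cvg_bigsum => j; apply: cvgMr; exact: cvg_cos_coeff'.
Qed.

Lemma expim (H : 'M[R]_n.+1) (c lam : 'I_n.+1 -> R) s r t :
  (forall k, (H ^+ k) s r = \sum_j c j * lam j ^+ k) ->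
  expitH_im H t s r = \sum_j c j * sin (t * lam j).
Proof.
move=> Hk; rewrite /expitH_im; apply: cvg_lim => //.
have -> : (fun N => \big[+%R/0]_(0 <= k < N) ((-1) ^+ k * t ^+ (2 * k).+1 / ((2 * k).+1`!)%:R * (H ^+ (2 * k).+1) s r))
  = (fun N => \sum_j c j * series (sin_coeff' (t * lam j)) N).
  apply/funext => N; rewrite /series /=.
  under eq_bigr do rewrite Hk mulr_sumr.
  rewrite exchange_big /=; apply: eq_bigr => j _; rewrite mulr_sumr.
  apply: eq_bigr => k _; rewrite /sin_coeff' -exprnP mul2n exprMn; ring.
apply: cvg_bigsum => j; apply: cvgMr; exact: cvg_sin_coeff'.
Qed.

Lemma powE (Q : 'M[R]_n.+1) (lam : 'I_n.+1 -> R) k :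
  Q^T *m Q = 1%:M -> Q *m Q^T = 1%:M ->
  (Q^T *m diag_mx (\row_j lam j) *m Q) ^+ k
    = Q^T *m diag_mx (\row_j lam j ^+ k) *m Q.
Proof.
move=> QtQ QQt; elim: k => [|k IH].
  rewrite expr0 (_ : \row_j lam j ^+ 0 = const_mx 1); last first.
    by apply/rowP => j; rewrite !mxE expr0.
  by rewrite diag_const_mx mulmx1 QtQ.
rewrite exprSr IH -mulmxE -!mulmxA (mulmxA Q) QQt mul1mx !mulmxA -(mulmxA Q^T) mulmx_diag.
congr (_ *m _ *m _); congr diag_mx; apply/rowP => j; rewrite !mxE exprSr.
by [].
Qed.

Lemma entryE (Q : 'M[R]_n.+1) (d : 'rV[R]_n.+1) s r :
  (Q^T *m diag_mx d *m Q) s r = \sum_j (Q j s * Q j r) * d 0 j.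
Proof.
rewrite mxE; apply: eq_bigr => j _; rewrite mul_mx_diag !mxE; ring.
Qed.

End Aux.

Theorem theorem2p2 (R : realType) (n : nat)
  (e : rel 'I_n.+1) (w : 'I_n.+1 -> 'I_n.+1 -> R)
  (Hgraph : weighted_graph e w) (Hconn : connected_graph e)
  (H : 'M[R]_n.+1)
  (HH : H = adjacency_mx e w \/ H = laplacian_mx e w)
  (Q : 'M[R]_n.+1) (lam : 'I_n.+1 -> R)
  (HQorth : Q^T *m Q = 1%:M)
  (Hlam_sorted : forall j k : 'I_n.+1, (j <= k)%N -> lam j <= lam k)
  (Hdecomp : H = Q^T *m diag_mx (\row_j lam j) *m Q)
  (s r : 'I_n.+1) (t0 : R)
  (HPST : fidelity H s r t0 = 1)
  (h : R) (Hh : `|h| < pi / (lam ord_max - lam ord0)) :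
  forall sigma : R,
    fidelity H s r (t0 + h) >=
      1 - h ^+ 2 * \sum_(j < n.+1) (Q j s) ^+ 2 * (lam j - sigma) ^+ 2.
Proof.
move=> sigma.
have QQt : Q *m Q^T = 1%:M by apply: mulmx1C.
have Hent k : (H ^+ k) s r = \sum_j (Q j s * Q j r) * lam j ^+ k.
  by rewrite Hdecomp powE // entryE; apply: eq_bigr => j _; rewrite mxE.
have colsq (a : 'I_n.+1) : \sum_j Q j a ^+ 2 = 1.
  have := congr1 (fun M : 'M[R]_n.+1 => M a a) HQorth; rewrite !mxE eqxx /= => E; rewrite -[RHS]E.
  by apply: eq_bigr => j _; rewrite !mxE expr2.
have sx := colsq s; have sy := colsq r.
have Re t := @expre _ _ H _ _ s r t Hent.
have Im t := @expim _ _ H _ _ s r t Hent.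
move: HPST; rewrite /fidelity Re Im.
set al := \sum_j Q j s * Q j r * cos (t0 * lam j).
set be := \sum_j Q j s * Q j r * sin (t0 * lam j).
move=> HPST.
have z : \sum_j ((Q j r * cos (t0 * lam j) - al * Q j s) ^+ 2
              + (Q j r * sin (t0 * lam j) - be * Q j s) ^+ 2) = 0.
  rewrite (eq_bigr (fun j => Q j r ^+ 2 + (al ^+ 2 + be ^+ 2) * Q j s ^+ 2
       + (- (2 * al)) * (Q j s * Q j r * cos (t0 * lam j))
       + (- (2 * be)) * (Q j s * Q j r * sin (t0 * lam j)))); last first.
    move=> j _; apply/eqP; rewrite -subr_eq0; apply/eqP.
    transitivity (Q j r ^+ 2 * (cos (t0 * lam j) ^+ 2 + sin (t0 * lam j) ^+ 2 - 1)).
      by ring.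
    by rewrite cos2Dsin2 subrr mulr0.
  rewrite !big_split /= -!mulr_sumr sx sy -/al -/be.
  have E2 : forall a b : R, 1 + (a ^+ 2 + b ^+ 2) * 1 + - (2 * a) * a + - (2 * b) * b
            = 1 - (a ^+ 2 + b ^+ 2) by move=> a b; ring.
  by rewrite E2 HPST subrr.
have key j : Q j r * cos (t0 * lam j) = al * Q j s /\
             Q j r * sin (t0 * lam j) = be * Q j s.
  have := psumr_eq0P (fun i _ => addr_ge0 (sqr_ge0 _) (sqr_ge0 _)) z (isT : true).
  move=> /(_ j) /eqP; rewrite paddr_eq0 ?sqr_ge0 // !sqrf_eq0 !subr_eq0.
  by move=> /andP[/eqP -> /eqP ->].
set P := \sum_j Q j s ^+ 2 * cos (h * lam j).
set Sg := \sum_j Q j s ^+ 2 * sin (h * lam j).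
have ReH : expitH_re H (t0 + h) s r = al * P - be * Sg.
  rewrite Re /P /Sg !mulr_sumr -sumrB; apply: eq_bigr => j _.
  rewrite mulrDl cosD; have [k1 k2] := key j.
  transitivity (Q j s * ((Q j r * cos (t0 * lam j)) * cos (h * lam j)
                        - (Q j r * sin (t0 * lam j)) * sin (h * lam j))).
    by ring.
  rewrite k1 k2; ring.
have ImH : expitH_im H (t0 + h) s r = be * P + al * Sg.
  rewrite Im /P /Sg !mulr_sumr -big_split /=; apply: eq_bigr => j _.
  rewrite mulrDl sinD; have [k1 k2] := key j.
  transitivity (Q j s * ((Q j r * sin (t0 * lam j)) * cos (h * lam j)
                        + (Q j r * cos (t0 * lam j)) * sin (h * lam j))).
    by ring.
  rewrite k1 k2; ring.
set cu := cos (h * sigma); set su := sin (h * sigma).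
set P' := \sum_j Q j s ^+ 2 * cos (h * (lam j - sigma)).
set S' := \sum_j Q j s ^+ 2 * sin (h * (lam j - sigma)).
have eP : P = P' * cu - S' * su.
  rewrite /P /P' /S' !mulr_suml -sumrB; apply: eq_bigr => j _.
  rewrite (_ : h * lam j = h * (lam j - sigma) + h * sigma); last by ring.
  rewrite cosD -/cu -/su; ring.
have eS : Sg = S' * cu + P' * su.
  rewrite /Sg /P' /S' !mulr_suml -big_split /=; apply: eq_bigr => j _.
  rewrite (_ : h * lam j = h * (lam j - sigma) + h * sigma); last by ring.
  rewrite sinD -/cu -/su; ring.
set D0 := \sum_j Q j s ^+ 2 * (lam j - sigma) ^+ 2.
have lb : 1 - h ^+ 2 * D0 / 2 <= P'.
  have : \sum_j Q j s ^+ 2 * (1 - (h * (lam j - sigma)) ^+ 2 / 2) <= P'.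
    apply: ler_sum => j _; apply: ler_wpM2l; [exact: sqr_ge0 | exact: cos_ge].
  rewrite (eq_bigr (fun j => Q j s ^+ 2 + (- (h ^+ 2 / 2)) *
              (Q j s ^+ 2 * (lam j - sigma) ^+ 2))); last by move=> j _; ring.
  rewrite big_split /= -mulr_sumr sx -/D0.
  suff -> : 1 - h ^+ 2 * D0 / 2 = 1 + - (h ^+ 2 / 2) * D0 by [].
  ring.
rewrite /fidelity ReH ImH.
have -> : (al * P - be * Sg) ^+ 2 + (be * P + al * Sg) ^+ 2
          = (al ^+ 2 + be ^+ 2) * ((P' ^+ 2 + S' ^+ 2) * (cu ^+ 2 + su ^+ 2)).
  by rewrite eP eS; ring.
rewrite HPST /cu /su cos2Dsin2 mul1r mulr1.
set D := h ^+ 2 * D0.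
move: lb; rewrite -/D => lb.
have hS := sqr_ge0 S'.
have [hpos|hneg] := leP 0 (1 - D / 2).
  have := ler_pM hpos hpos lb lb; rewrite -!expr2.
  have -> : (1 - D / 2) ^+ 2 = 1 - D + D ^+ 2 / 4 by field.
  have hD := sqr_ge0 D.
  move: hS hD.
  set a := P' ^+ 2; set b := S' ^+ 2; set c := D ^+ 2.
  move=> hS hD h1; lra.
have hP := sqr_ge0 P'.
set a := P' ^+ 2; set b := S' ^+ 2.
move: hP hS; rewrite -/a -/b => hP hS'.
lra.
Qed.
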